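(* Let $G$ be a finite abelian group, $M$ a finite category, and $V\in\mathrm{Fun}(M,\mathrm{Vect}_{\hat G})$ indecomposable. Then every endomorphism $V\to V$ (natural transformation) is either nilpotent or an isomorphism.
   Context: $\hat G=G\sqcup\{0\}$ with $0$ absorbing. $\mathrm{Vect}_{\hat G}$: objects are finite pointed sets with an action of $\hat G$ ($0v=0$, $g0=0$) such that $G$ acts freely on nonzero elements; morphisms $f$ satisfy $f(0)=0$, $f(gv)=gf(v)$, and $f(v_1)=f(v_2)\neq0\Rightarrow Gv_1=Gv_2$. Direct sum $V\oplus W$ is disjoint union with zeros identified; in $\mathrm{Fun}(M,\mathrm{Vect}_{\hat G})$ (functors and natural transformations), subobjects and direct sums are formed pointwise. A finite category has finitely many objects and morphisms. $V$ is indecomposable if $V\neq0$ and $V=V_1\oplus V_2$ (for subfunctors $V_1,V_2$) implies $V_1=0$ or $V_2=0$. A natural transformation $N:V\to V$ is nilpotent if $N^m$ is the zero transformation for some $m\in\mathbb N$. *)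

(* Defs.v *)
From mathcomp Require Import all_boot all_fingroup.
Unset Printing Implicit Defensive.
Local Open Scope group_scope.

Record FinCat := {
  Ob : finType;
  Hom : Ob -> Ob -> finType;
  cid : forall a, Hom a a;
  ccomp : forall a b c, Hom b c -> Hom a b -> Hom a c;
  ccompA : forall a b c d (h : Hom c d) (g : Hom b c) (f : Hom a b),
      ccomp _ _ _ h (ccomp _ _ _ g f) = ccomp _ _ _ (ccomp _ _ _ h g) f;
  ccomp1f : forall a b (f : Hom a b), ccomp _ _ _ (cid b) f = f;
  ccompf1 : forall a b (f : Hom a b), ccomp _ _ _ f (cid a) = f
}.

(* A functor M -> Vect_{\hat G}.  Each object is sent to a finite pointed set
   (fobj a, fzero a) with an action of \hat G = G ⊔ {0}: the action of g ∈ G is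
   fact a g, and 0 ∈ \hat G acts as the constant map to the base point
   (so 0v = 0 holds by definition); g0 = 0; G acts freely on nonzero elements.
   Morphisms are maps of Vect_{\hat G}. *)
Record GFunctor (gT : finGroupType) (M : FinCat) := {
  fobj : Ob M -> finType;
  fzero : forall a, fobj a;
  fact : forall a, gT -> fobj a -> fobj a;
  fmap : forall a b, Hom M a b -> fobj a -> fobj b;
  fact1 : forall a v, fact a 1 v = v;
  factM : forall a g h v, fact a (g * h) v = fact a g (fact a h v);
  fact0 : forall a g, fact a g (fzero a) = fzero a;
  fact_free : forall a g v, v != fzero a -> fact a g v = v -> g = 1;
  fmap0 : forall a b (f : Hom M a b), fmap a b f (fzero a) = fzero b;
  fmap_act : forall a b (f : Hom M a b) g v, fmap a b f (fact a g v) = fact b g (fmap a b f v);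
  fmap_orbit : forall a b (f : Hom M a b) v1 v2,
      fmap a b f v1 = fmap a b f v2 -> fmap a b f v1 != fzero b ->
      exists g, v1 = fact a g v2;
  fmap_id : forall a v, fmap a a (cid M a) v = v;
  fmap_comp : forall a b c (g : Hom M b c) (f : Hom M a b) v,
      fmap _ _ (ccomp M _ _ _ g f) v = fmap _ _ g (fmap _ _ f v)
}.
Arguments cid {_} _.
Arguments ccomp {_ _ _ _}.
Arguments Hom {_} _ _.
Arguments fobj {_ _} _ _.
Arguments fzero {_ _} _ _.
Arguments fact {_ _} _ _ _ _.
Arguments fmap {_ _} _ {_ _} _ _.

Set Implicit Arguments. Unset Strict Implicit.
Section Defs.
Variables (gT : finGroupType) (M : FinCat) (V : GFunctor gT M).

(* A subfunctor: pointwise a subobject in Vect_{\hat G} (a G-stable subset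
   containing 0; the inclusion is then a morphism), stable under V(f). *)
Definition is_subfunctor (S : forall a, {set fobj V a}) : Prop :=
  [/\ forall a, fzero V a \in S a,
      forall a g v, v \in S a -> fact V a g v \in S a &
      forall a b (f : Hom a b) v, v \in S a -> fmap V f v \in S b].

Definition is_zero_sub (S : forall a, {set fobj V a}) : Prop :=
  forall a, S a = [set fzero V a].

(* V = S1 ⊕ S2 (internal direct sum, pointwise): the canonical map from the
   disjoint union with zeros identified is a bijection. *)
Definition is_direct_sum (S1 S2 : forall a, {set fobj V a}) : Prop :=
  forall a, S1 a :|: S2 a = [set: fobj V a] /\ S1 a :&: S2 a = [set fzero V a].

Definition nonzero_functor : Prop := exists a (v : fobj V a), v != fzero V a.

Definition indecomposable : Prop :=
  nonzero_functor /\
  forall S1 S2, is_subfunctor S1 -> is_subfunctor S2 -> is_direct_sum S1 S2 ->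
    is_zero_sub S1 \/ is_zero_sub S2.

(* A natural transformation V -> V whose components are morphisms of
   Vect_{\hat G}. *)
Definition is_endo (N : forall a, fobj V a -> fobj V a) : Prop :=
  [/\ forall a, N a (fzero V a) = fzero V a,
      forall a g v, N a (fact V a g v) = fact V a g (N a v),
      forall a v1 v2, N a v1 = N a v2 -> N a v1 != fzero V a ->
        exists g, v1 = fact V a g v2 &
      forall a b (f : Hom a b) v, N b (fmap V f v) = fmap V f (N a v)].

Definition nilpotent (N : forall a, fobj V a -> fobj V a) : Prop :=
  exists m : nat, forall a v, iter m (N a) v = fzero V a.

Definition is_iso (N : forall a, fobj V a -> fobj V a) : Prop :=
  exists N', is_endo N' /\
    (forall a v, N' a (N a v) = v) /\ (forall a v, N a (N' a v) = v).

End Defs.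

(* Main.v *)
Require Import Defs.
From mathcomp Require Import all_boot all_fingroup.
From mathcomp Require Import zify.

Lemma iter_period (T : Type) (f : T -> T) y i d :
  iter (i + d) f y = iter i f y -> forall k, iter (i + k * d) f y = iter i f y.
Proof.
move=> H; elim=> [|k IH]; first by rewrite mul0n addn0.
have -> : i + k.+1 * d = k * d + (i + d) by rewrite mulSn; lia.
by rewrite iterD H -iterD addnC.
Qed.

Lemma pigeon_iter (T : finType) (f : T -> T) (y : T) :
  exists i d, [/\ i <= #|T|, 0 < d & iter (i + d) f y = iter i f y].
Proof.
pose g (i : 'I_#|T|.+1) := iter i f y.
case E: [exists i : 'I_#|T|.+1, exists j : 'I_#|T|.+1, (i < j) && (g i == g j)].
  case/existsP: E => i /existsP [j /andP [lij /eqP e]].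
  exists i, (j - i); split.
  - by rewrite -ltnS ltn_ord.
  - by rewrite subn_gt0.
  - by rewrite subnKC ?(ltnW lij) //; rewrite /g in e.
have injg : injective g.
  move=> i j e; case: (ltngtP i j) => [lij|lji|]; last exact: val_inj.
    move/negbT: E; move/existsPn/(_ i)/existsPn/(_ j).
    by rewrite lij e eqxx.
  move/negbT: E; move/existsPn/(_ j)/existsPn/(_ i).
  by rewrite lji e eqxx.
have := @leq_card _ _ g injg; rewrite card_ord.
by rewrite ltnn.
Qed.

Lemma stab (T : finType) (f : T -> T) (m : nat) (y : T) : #|T| <= m ->
  exists d, 0 < d /\ forall k, iter (m + k * d) f y = iter m f y.
Proof.
move=> Hm; have [i [d [Hi Hd H]]] := @pigeon_iter T f y.
exists d; split=> // k.
have Him : i <= m by apply: leq_trans Hm.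
by rewrite -(subnK Him) -addnA iterD (@iter_period _ f y i d H) -iterD.
Qed.

Section Main.
Variables (gT : finGroupType) (M : FinCat) (V : GFunctor gT M).
Variable N : forall a, fobj V a -> fobj V a.
Hypothesis HN : is_endo N.

Lemma iterN0 a k : iter k (N a) (fzero V a) = fzero V a.
Proof. case: HN => H0 _ _ _; by elim: k => //= k ->. Qed.

Lemma iterNact a k g v : iter k (N a) (fact V a g v) = fact V a g (iter k (N a) v).
Proof. case: HN => _ H _ _; by elim: k => //= k ->. Qed.

Lemma iterNmap a b (f : Hom a b) k v : iter k (N b) (fmap V f v) = fmap V f (iter k (N a) v).
Proof. case: HN => _ _ _ H; by elim: k => //= k ->. Qed.

Lemma iterNorb a k v1 v2 : iter k (N a) v1 = iter k (N a) v2 ->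
  iter k (N a) v1 != fzero V a -> exists g, v1 = fact V a g v2.
Proof.
case: HN => H0 Hact Ho _.
elim: k v1 v2 => [|k IH] v1 v2 /=.
  by move=> -> _; exists 1%g; rewrite fact1.
move=> e ne; rewrite -!iterS !iterSr in e ne.
have ne1 : N a v1 != fzero V a.
  by apply: contra ne => /eqP ->; rewrite iterN0.
have [g eg] := IH _ _ e ne.
have [h eh] : exists h, v1 = fact V a h (fact V a g v2).
  by apply: Ho => //; rewrite Hact -eg.
by exists (h * g)%g; rewrite eh factM.
Qed.

End Main.

Theorem mainTheorem5 (gT : finGroupType) (M : FinCat) (V : GFunctor gT M) :
  abelian [set: gT] -> indecomposable V ->
  forall N : forall a, fobj V a -> fobj V a,
    is_endo N -> nilpotent N \/ is_iso N.
Proof.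
move=> _ [nz Hind] N HN.
have [H0 Hact Ho Hmap] := HN.
set m := (\max_(a : Ob M) #|fobj V a|).+1.
have Hm : forall a, #|fobj V a| <= m.
  by move=> a; apply: leqW; apply: (@leq_bigmax _ (fun a => #|fobj V a|) a).
pose F a := iter m (N a).
have key : forall a y, (exists z, F a y = F a (F a z)) /\
     (F a (F a y) = fzero V a -> F a y = fzero V a).
  move=> a y; have [d [d0 hk]] := @stab _ (N a) m y (Hm a).
  have le : m <= m * d by rewrite leq_pmulr.
  have E : m + m * d = (m * d - m) + (m + m) by lia.
  split.
    exists (iter (m * d - m) (N a) y); rewrite /F -!iterD -(hk m).
    by have -> : m + m + (m * d - m) = m + m * d by lia.
  move=> e; rewrite /F in e; rewrite /F -(hk m) E iterD iterD e.
  by rewrite iterN0.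
pose S1 a := [set v | F a v == fzero V a].
pose S2 a := [set F a u | u in [set: fobj V a]].
have sub1 : is_subfunctor S1.
  split.
  - by move=> a; rewrite inE /F iterN0.
  - by move=> a g v; rewrite !inE /F iterNact // => /eqP ->; rewrite Defs.fact0.
  - by move=> a b f v; rewrite !inE /F iterNmap // => /eqP ->; rewrite fmap0.
have sub2 : is_subfunctor S2.
  split.
  - by move=> a; apply/imsetP; exists (fzero V a) => //; rewrite /F iterN0.
  - move=> a g v /imsetP [u _ ->]; apply/imsetP; exists (fact V a g u) => //.
    by rewrite /F iterNact.
  - move=> a b f v /imsetP [u _ ->]; apply/imsetP; exists (fmap V f u) => //.
    by rewrite /F iterNmap.
have ds : is_direct_sum S1 S2.
  move=> a; split; apply/setP => v.
    rewrite in_setU in_setT inE; case: eqP => //= ne.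
    have [[z ez] _] := key a v.
    have [g eg] := @iterNorb _ _ V N HN _ _ _ _ ez (introN eqP ne).
    by apply/imsetP; exists (fact V a g z) => //; rewrite eg /F iterNact.
  rewrite in_setI in_set1 inE; apply/andP/eqP => [[/eqP e /imsetP [u _ eu]]| ->].
    by rewrite eu; apply: (proj2 (key a u)); rewrite -eu.
  split; first by rewrite /F iterN0.
  by apply/imsetP; exists (fzero V a) => //; rewrite /F iterN0.
case: (Hind S1 S2 sub1 sub2 ds) => [Z1|Z2]; last first.
  left; exists m => a v.
  have : F a v \in S2 a by apply/imsetP; exists v.
  by rewrite Z2 inE => /eqP.
right.
have injN : forall a, injective (N a).
  move=> a v1 v2 e; case: (eqVneq (N a v1) (fzero V a)) => [e0|ne].
    have : v1 \in S1 a by rewrite inE /F iterSr e0 iterN0.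
    rewrite Z1 inE => /eqP ->.
    have : v2 \in S1 a by rewrite inE /F iterSr -e e0 iterN0.
    by rewrite Z1 inE => /eqP ->.
  have [g eg] := Ho a v1 v2 e ne.
  have g1 : g = 1%g.
    apply: (@fact_free _ _ V a g (N a v2)); first by rewrite -e.
    by rewrite -Hact -eg.
  by rewrite eg g1 Defs.fact1.
exists (fun a => invF (injN a)); split; [|split].
- split.
  + by move=> a; apply: (injN a); rewrite f_invF H0.
  + by move=> a g v; apply: (injN a); rewrite f_invF Hact f_invF.
  + move=> a v1 v2 e _; exists 1%g; rewrite Defs.fact1.
    by rewrite -(f_invF (injN a) v1) e f_invF.
  + by move=> a b f v; apply: (injN b); rewrite f_invF Hmap f_invF.
- by move=> a v; apply: invF_f.
- by move=> a v; apply: f_invF.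
Qed.
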